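(* There are no binary self-orthogonal $[125,7,62]$ codes and no binary self-orthogonal $[62,7,30]$ codes.
   Context: A binary linear code $C$ is self-orthogonal if $C\subseteq C^\perp$. *)

(* Defs.v *)
From HB Require Import structures.
From mathcomp Require Import all_boot all_order all_algebra.
Set Implicit Arguments. Unset Strict Implicit. Unset Printing Implicit Defensive.
Import GRing.Theory.
Local Open Scope ring_scope.

Definition binCode (n : nat) := {vspace 'rV['F_2]_n}.

Definition wt (n : nat) (u : 'rV['F_2]_n) : nat := #|[set i | u 0 i != 0]|.

Definition dotF2 (n : nat) (u v : 'rV['F_2]_n) : 'F_2 := (u *m v^T) 0 0.

Definition self_orthogonal (n : nat) (C : binCode n) : Prop :=
  forall u v, u \in C -> v \in C -> dotF2 u v = 0.

Definition min_dist (n : nat) (C : binCode n) (d : nat) : Prop :=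
  (exists2 c, c \in C & (c != 0) && (wt c == d)%N) /\
  (forall c, c \in C -> c != 0 -> (d <= wt c)%N).

Definition is_nkd_code (n k d : nat) (C : binCode n) : Prop :=
  (\dim C = k)%N /\ min_dist C d.
Arguments is_nkd_code : clear implicits.

(* Main.v *)
Require Import Defs.
From mathcomp Require Import all_boot all_order all_algebra all_field zify.
Import GRing.Theory.
Local Open Scope ring_scope.

Lemma F2c (x : 'F_2) : x = 0 \/ x = 1.
Proof. case: x => [[|[|m]] H]; [left|right|]; try exact: val_inj. by []. Qed.
Lemma F211 : (1 + 1 : 'F_2) = 0. Proof. exact: val_inj. Qed.
Lemma F2nat (x : 'F_2) : x = (x != 0)%:R.
Proof. by case: (F2c x) => ->. Qed.

Section S.
Variable n : nat.
Notation V := 'rV['F_2]_n.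

Lemma half (S : {set V}) (P : pred V) :
  (forall u v, u \in S -> v \in S -> u + v \in S) ->
  (forall u a, u \in S -> a \in S -> ~~ P u -> ~~ P a -> P (u + a)) ->
  (#|[set u in S | ~~ P u]| <= #|[set u in S | P u]|)%N.
Proof.
move=> Sadd SP.
case: (pickP [pred a in S | ~~ P a]) => [a /andP[aS nPa] | none].
  rewrite -(card_imset _ (addIr a)); apply: subset_leq_card.
  apply/subsetP => x /imsetP[u uin ->]; move: uin; rewrite inE => /andP[uS nPu].
  by rewrite inE Sadd // SP.
rewrite (_ : [set u in S | ~~ P u] = set0) ?cards0 //.
by apply/setP => u; rewrite !inE; have := none u; rewrite /= => ->.
Qed.

Lemma wtE (u : V) : wt u = (\sum_i (u 0%R i != 0%R))%N.
Proof.
rewrite /wt -sum1_card big_mkcond /=; apply: eq_bigr => i _.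
by rewrite inE; case: (_ != 0).
Qed.

Lemma sum_wt (S : {set V}) :
  (forall u v, u \in S -> v \in S -> u + v \in S) ->
  (2 * \sum_(u in S) wt u <= n * #|S|)%N.
Proof.
move=> Sadd.
rewrite (eq_bigr (fun u : V => \sum_i (u 0%R i != 0%R))%N); last by move=> u _; rewrite wtE.
rewrite exchange_big /= big_distrr /=.
rewrite (_ : (n * #|S|)%N = \sum_(i < n) #|S|)%N; last by rewrite sum_nat_const card_ord.
apply: leq_sum => i _.
have H := @half S (fun u : V => u 0 i == 0) Sadd.
have {H}H : (#|[set u in S | ~~ (u 0%R i == 0%R)]| <= #|[set u in S | u 0%R i == 0%R]|)%N.
  apply: H => u a _ _; rewrite mxE.
  by case: (F2c (u 0 i)) => ->; case: (F2c (a 0 i)) => -> //; rewrite F211.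
have E1 : (\sum_(u in S) (u 0%R i != 0%R) = #|[set u in S | u 0%R i != 0%R]|)%N.
  rewrite -sum1_card big_mkcond /= [RHS]big_mkcond /=; apply: eq_bigr => u _.
  by rewrite inE; case: (u \in S); case: (_ != 0).
rewrite E1.
have E2 := cardsID [set u : V | u 0%R i == 0%R] S.
rewrite -E2.
have -> : S :&: [set u : V | u 0%R i == 0%R] = [set u in S | u 0%R i == 0%R].
  by apply/setP => u; rewrite !inE.
have -> : S :\: [set u : V | u 0%R i == 0%R] = [set u in S | u 0%R i != 0%R].
  by apply/setP => u; rewrite !inE andbC.
move: H; set a := #|_|; set b := #|_|. lia.
Qed.

Lemma sum_lb (S : {set V}) (w : nat) :
  (forall u, u \in S -> u != 0%R -> w <= wt u)%N ->
  ((#|S| - 1) * w <= \sum_(u in S) wt u)%N.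
Proof.
move=> Hw.
apply: (@leq_trans (\sum_(u in S | u != 0%R) w)%N).
  rewrite sum_nat_const (cardD1 0%R S); apply: leq_mul => //.
  rewrite leq_subLR; apply: leq_add; first by case: (_ \in _).
  by apply: eq_leq; apply: eq_card => x; rewrite !inE andbC.
rewrite [X in (_ <= X)%N](bigID (fun u : V => u != 0%R)) /=.
apply: leq_trans (leq_addr _ _); apply: leq_sum => u /andP[]; exact: Hw.
Qed.

Lemma dotE (u v : V) : dotF2 u v = \sum_i u 0 i * v 0 i.
Proof. by rewrite /dotF2 !mxE; apply: eq_bigr => i _; rewrite mxE. Qed.

Definition inter (u v : V) := (\sum_i ((u 0%R i * v 0%R i)%R != 0%R))%N.

Lemma wtD (u v : V) : (wt (u + v) + 2 * inter u v = wt u + wt v)%N.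
Proof.
rewrite !wtE /inter big_distrr -!big_split /=; apply: eq_bigr => i _.
rewrite mxE.
by case: (F2c (u 0 i)) => ->; case: (F2c (v 0 i)) => ->; rewrite ?F211 ?addr0 ?add0r ?mulr1 ?mul1r ?mulr0 ?mul0r.
Qed.

Lemma dot0_even (u v : V) : dotF2 u v = 0 -> (2 %| inter u v)%N.
Proof.
rewrite dotE (eq_bigr (fun i => ((u 0 i * v 0 i) != 0)%:R)); last by move=> i _; rewrite -F2nat.
rewrite -natr_sum => H; rewrite (dvdn_pcharf (pchar_Fp (isT : prime 2))).
by apply/eqP; exact: H.
Qed.

Lemma inter_self (u : V) : inter u u = wt u.
Proof. by rewrite wtE /inter; apply: eq_bigr => i _; case: (F2c (u 0 i)) => ->. Qed.

End S.
Arguments inter {n}.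
Arguments half {n}.
Arguments sum_wt {n}.
Arguments sum_lb {n}.

Lemma main (n d w : nat) (C : binCode n) :
  is_nkd_code n 7 d C -> self_orthogonal C ->
  (forall x, d <= x -> 4 %| x -> w <= x)%N ->
  exists D, (64 <= D /\ 2 * ((D - 1) * w) <= n * D)%N.
Proof.
move=> [dimC [_ Hmin]] so Hw.
pose S := [set u in C].
pose D := [set u in S | 4 %| wt u]%N.
have ev : forall u, u \in C -> (2 %| wt u)%N.
  by move=> u uC; rewrite -inter_self; apply: dot0_even; apply: so.
have key : forall u v, u \in C -> v \in C ->
    (wt (GRing.add u v) + 2 * inter u v)%N = (wt u + wt v)%N /\ (2 %| inter u v)%N /\ (2 %| wt u)%N /\ (2 %| wt v)%N.
  move=> u v uC vC; split; first exact: wtD.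
  by split; [apply: dot0_even; apply: so | split; apply: ev].
have Sadd : forall u v, u \in S -> v \in S -> u + v \in S.
  by move=> u v; rewrite !inE => uC vC; rewrite rpredD.
have Dadd : forall u v, u \in D -> v \in D -> u + v \in D.
  move=> u v; rewrite !inE => /andP[uC du] /andP[vC dv]; rewrite rpredD //=.
  have [h1 [h2 [h3 h4]]] := key u v uC vC; move: h1 h2 h3 h4 du dv; set a := wt _; set b := wt u; set c := wt v; set e := inter _ _. lia.
have cS : #|S| = 128%N.
  rewrite cardsE card_vspace card_Fp //; exact: (congr1 (fun k => 2 ^ k)%N dimC).
have hD : (#|[set u in S | ~~ (4 %| wt u)%N]| <= #|D|)%N.
  apply: (half S) => // u a; rewrite !inE => uC aC nu na.
  have [h1 [h2 [h3 h4]]] := key u a uC aC; move: h1 h2 h3 h4 nu na; set x := wt _; set y := wt u; set z := wt a; set e := inter _ _. lia.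
have E2 := cardsID [set u : 'rV['F_2]_n | 4 %| wt u]%N S.
have e1 : S :&: [set u | 4 %| wt u]%N = D by apply/setP => u; rewrite !inE.
have e2 : S :\: [set u | 4 %| wt u]%N = [set u in S | ~~ (4 %| wt u)%N].
  by apply/setP => u; rewrite !inE andbC.
rewrite e1 e2 cS in E2.
exists #|D|; split.
  move: hD E2; set q := #|D|; set r := #|_|. lia.
apply: (leq_trans _ (sum_wt D Dadd)).
rewrite leq_mul2l /=; apply: sum_lb => u; rewrite !inE => /andP[uC du] u0.
by apply: Hw => //; apply: Hmin.
Qed.

Theorem proposition6p2 :
  (forall C : binCode 125, ~ (is_nkd_code 125 7 62 C /\ self_orthogonal C)) /\
  (forall C : binCode 62, ~ (is_nkd_code 62 7 30 C /\ self_orthogonal C)).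
Proof.
split=> C [H1 H2].
  have [D [h1 h2]] := @main 125 62 64 C H1 H2 ltac:(move=> x; lia); lia.
have [D [h1 h2]] := @main 62 30 32 C H1 H2 ltac:(move=> x; lia); lia.
Qed.
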